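(* Let $N\ge 2$ and let $p(z)=\sum_{k=0}^{N-1}\alpha_kz^k$ be a nonconstant complex polynomial. Let $f_n$ ($n=0,\ldots,N-1$) and $f_n'$ ($n=0,\ldots,N-1$) be as defined below, and set $$k:=\max\{n: f_n\neq 0\},\qquad k':=\max\{n: f_n'\neq0\},\qquad m:=-\frac{k}{2}+\sqrt{\frac{f_k'}{f_k}+\frac{k^2}{4}}.$$ Then $k\ge k'$, $m\in\mathbb{N}_0=\{0,1,2,\ldots\}$ (in particular $f_k'/f_k$ is a nonnegative real number), and $$\alpha_j=0 \text{ for } j<m,\qquad \alpha_m\neq0,\quad \alpha_{m+k}\neq 0,\qquad \alpha_j=0\text{ for } j>m+k.$$ In particular, $\deg(p)=m+k$.
   Context: $\omega_m:=e^{2\pi i/m}$. For $n=0,\ldots,N-1$, $f_n:=\frac{1}{2N-1}\sum_{j=0}^{2N-2}|p(\omega_{2N-1}^j)|^2\exp\big(-\frac{2\pi i jn}{2N-1}\big)$. For $n=0,\ldots,N-2$, $f_n':=\frac{1}{2N-3}\sum_{j=0}^{2N-4}|p'(\omega_{2N-3}^j)|^2\exp\big(-\frac{2\pi i jn}{2N-3}\big)$, and $f_{N-1}':=0$. *)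

(* Defs.v *)
From HB Require Import structures.
From mathcomp Require Import all_boot all_order all_algebra all_field.
Set Implicit Arguments. Unset Strict Implicit. Unset Printing Implicit Defensive.
Import Order.TTheory GRing.Theory Num.Theory.
Local Open Scope ring_scope.

(* omega_m = e^{2 pi i/m}.  m.-root (-1) is the m-th root of -1 of smallest
   nonnegative argument, i.e. e^{i pi/m}; its square is e^{2 pi i/m}. *)
Definition omega (m : nat) : algC := (m.-root (-1)) ^+ 2.

Definition fcoef (N : nat) (p : {poly algC}) (n : nat) : algC :=
  let M := (2 * N - 1)%N in
  (M%:R)^-1 * \sum_(j < M) `|p.[omega M ^+ j]| ^+ 2 * (omega M ^+ (j * n))^-1.

Definition fcoef' (N : nat) (p : {poly algC}) (n : nat) : algC :=
  let M := (2 * N - 3)%N in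
  if (n < N - 1)%N then
    (M%:R)^-1 * \sum_(j < M) `|(p^`()).[omega M ^+ j]| ^+ 2 * (omega M ^+ (j * n))^-1
  else 0.

Definition kmax (N : nat) (f : nat -> algC) : nat :=
  \max_(n < N | f n != 0) (n : nat).

(* Main.v *)
Require Import Defs.
From HB Require Import structures.
From mathcomp Require Import all_boot all_order all_algebra all_field.
From mathcomp Require Import ring lra zify.
Import Order.TTheory GRing.Theory Num.Theory.
Local Open Scope ring_scope.

Lemma sq_lt (R : realFieldType) (a b : R) : 0 < a -> 0 < b -> a^+2 < b^+2 -> a < b.
Proof. move=> *; nra. Qed.
Lemma L12 (R : realFieldType) (ar ai br bi : R) :
  ar^+2 + ai^+2 = 1 -> br^+2 + bi^+2 = 1 -> 0 < ai -> 0 < bi -> br < ar ->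
  0 < ar * bi - br * ai /\ br < br * ar + bi * ai.
Proof.
move=> ha hb hai hbi hab.
have har : ar < 1 by nra.
have [hs|hs] := lerP (ar + br) 0.
- have : bi^+2 <= ai^+2 by nra.
  move=> h2. have hb' : bi <= ai by nra. split; nra.
- have : ai^+2 < bi^+2 by nra.
  move=> h2; have h : ai < bi by apply: sq_lt. split; nra.
Qed.
Lemma L3 (R : realFieldType) (ar ai br bi : R) :
  ar^+2 + ai^+2 = 1 -> br^+2 + bi^+2 = 1 -> 0 <= ai -> 0 <= bi -> ar = br -> ai = bi.
Proof. move=> *; nra. Qed.
Lemma L4 (R : realFieldType) (ar ai : R) :
  ar^+2 + ai^+2 = 1 -> 0 < ai -> -1 < ar.
Proof. move=> *; nra. Qed.

Lemma L12C (ar ai br bi : algC) : ar \is Num.real -> ai \is Num.real -> br \is Num.real -> bi \is Num.real ->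
  ar^+2 + ai^+2 = 1 -> br^+2 + bi^+2 = 1 -> 0 < ai -> 0 < bi -> br < ar ->
  0 < ar * bi - br * ai /\ br < br * ar + bi * ai.
Proof.
move=> Ra Ia Rb Ib.
rewrite -[ar]/(algRval (in_algR Ra)) -[ai]/(algRval (in_algR Ia)).
rewrite -[br]/(algRval (in_algR Rb)) -[bi]/(algRval (in_algR Ib)).
move: (in_algR Ra) (in_algR Ia) (in_algR Rb) (in_algR Ib) => x1 x2 x3 x4.
rewrite -!rmorphXn -!rmorphD -(rmorph1 algRval) => /val_inj ha /val_inj hb.
rewrite -(rmorph0 algRval) => hai hbi hab.
have [h1 h2] := @L12 _ _ _ _ _ ha hb hai hbi hab.
split.
- have h1' : algRval 0 < algRval (x1 * x4 - x3 * x2) := h1.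
  by rewrite rmorph0 rmorphB !rmorphM in h1'.
- have h2' : algRval x3 < algRval (x3 * x1 + x4 * x2) := h2.
  by rewrite rmorphD !rmorphM in h2'.
Qed.

Lemma L3C (ar ai br bi : algC) : ar \is Num.real -> ai \is Num.real -> br \is Num.real -> bi \is Num.real ->
  ar^+2 + ai^+2 = 1 -> br^+2 + bi^+2 = 1 -> 0 <= ai -> 0 <= bi -> ar = br -> ai = bi.
Proof.
move=> Ra Ia Rb Ib.
rewrite -[ar]/(algRval (in_algR Ra)) -[ai]/(algRval (in_algR Ia)).
rewrite -[br]/(algRval (in_algR Rb)) -[bi]/(algRval (in_algR Ib)).
move: (in_algR Ra) (in_algR Ia) (in_algR Rb) (in_algR Ib) => x1 x2 x3 x4.
rewrite -!rmorphXn -!rmorphD -(rmorph1 algRval) => /val_inj ha /val_inj hb.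
rewrite -(rmorph0 algRval) => hai hbi /val_inj hab.
by rewrite (@L3 _ _ _ _ _ ha hb hai hbi hab).
Qed.

Lemma L4C (ar ai : algC) : ar \is Num.real -> ai \is Num.real ->
  ar^+2 + ai^+2 = 1 -> 0 < ai -> -1 < ar.
Proof.
move=> Ra Ia.
rewrite -[ar]/(algRval (in_algR Ra)) -[ai]/(algRval (in_algR Ia)).
move: (in_algR Ra) (in_algR Ia) => x1 x2.
rewrite -!rmorphXn -!rmorphD -(rmorph1 algRval) => /val_inj ha.
rewrite -(rmorph0 algRval) => hai.
have h := @L4 _ _ _ ha hai.
have h' : algRval (-1) < algRval x1 := h.
by rewrite rmorphN1 in h'.
Qed.

Lemma norm_unity (x : algC) n : (0 < n)%N -> x ^+ n = 1 -> `|x| = 1.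
Proof.
move=> n0 xn; have := pexpr_eq1 n0 (normr_ge0 x).
by rewrite -normrX xn normr1 eqxx => /esym/eqP.
Qed.

Lemma ReIm1 (x : algC) : `|x| = 1 -> 'Re x ^+ 2 + 'Im x ^+ 2 = 1.
Proof. by move=> h; rewrite -normC2_Re_Im h expr1n. Qed.

Lemma conj_unity (x : algC) n : (0 < n)%N -> x ^+ n = 1 -> x^* = x ^+ n.-1.
Proof.
move=> n0 xn; have nx := norm_unity _ _ n0 xn.
have x0 : x != 0 by rewrite -normr_eq0 nx oner_eq0.
apply: (mulIf x0); rewrite -normCKC nx expr1n -exprSr prednK //.
Qed.

Lemma eq_upper (a b : algC) : `|a| = 1 -> `|b| = 1 -> 0 <= 'Im a -> 0 <= 'Im b ->
  'Re a = 'Re b -> a = b.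
Proof.
move=> na nb ia ib hr; apply/eqCP; split => //.
exact: (L3C _ _ _ _ (Creal_Re a) (Creal_Im a) (Creal_Re b) (Creal_Im b) (ReIm1 _ na) (ReIm1 _ nb) ia ib hr).
Qed.

Lemma real_unit (g : algC) : `|g| = 1 -> 'Im g = 0 -> g = 1 \/ g = -1.
Proof.
move=> ng ig; have Rg : g \is Num.real by apply/Creal_ImP.
have : g ^+ 2 == 1 by rewrite -real_normK // ng expr1n.
by rewrite sqrf_eq1 => /orP[/eqP->|/eqP->]; [left|right].
Qed.

Lemma seq_max (f : nat -> algC) (s : seq nat) : (forall i, f i \is Num.real) ->
  s != [::] -> exists2 i, i \in s & forall j, j \in s -> f j <= f i.
Proof.
move=> Hr; elim: s => // a s IH _.
have [->|sn] := eqVneq s [::].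
  by exists a; rewrite ?mem_seq1 // => j; rewrite mem_seq1 => /eqP->.
have [i iin hi] := IH sn.
have [h|h] := real_leP (Hr a) (Hr i).
- exists i; first by rewrite in_cons iin orbT.
  by move=> j; rewrite in_cons => /orP[/eqP->//|/hi].
- exists a; first by rewrite in_cons eqxx.
  move=> j; rewrite in_cons => /orP[/eqP->//|/hi hj].
  exact: (le_trans hj (ltW h)).
Qed.

Section Prim.
Variable M : nat.
Hypothesis M1 : (1 < M)%N.
Let K := (M * 2)%N.
Let K0 : (0 < K)%N. Proof. rewrite /K; lia. Qed.
Variable y : algC.
Hypothesis py : K.-primitive_root y.

Let unitK (g : algC) : g ^+ K = 1 -> `|g| = 1.
Proof. exact: norm_unity K0. Qed.

Let conjK (g : algC) : g ^+ K = 1 -> (g^*) ^+ K = 1.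
Proof. by move=> h; rewrite -rmorphXn h rmorph1. Qed.

Let exists_u : exists u : algC, [/\ u ^+ K = 1, 0 < 'Im u &
   forall g : algC, g ^+ K = 1 -> 0 < 'Im g -> 'Re g <= 'Re u].
Proof.
pose s := [seq i <- iota 0 K | 0 < 'Im (y ^+ i)].
have yK : y ^+ K = 1 := prim_expr_order py.
have [i0 i0s hi0] : exists2 i, i \in s & forall j, j \in s -> 'Re (y ^+ j) <= 'Re (y ^+ i).
  apply: seq_max => [i|]; first exact: Creal_Re.
  have nz : 'Im y != 0.
    apply/negP => /eqP iy.
    have [y1|y1] := real_unit _ (unitK _ yK) iy.
      by move: (prim_order_dvd py 1); rewrite expr1 y1 eqxx /K; case: (M) M1 => // m _ /dvdn_leq; lia.
    by move: (prim_order_dvd py 2); rewrite y1 sqrrN expr1n eqxx /K => /dvdn_leq; lia.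
  have Ry := Creal_Im y.
  have [h|h|h] := real_ltgtP Ry (rpred0 _ : (0 : algC) \is Num.real).
  - apply/negP => /eqP/(congr1 (fun s => K.-1 \in s)).
    rewrite mem_filter mem_iota /= -conj_unity // Im_conj oppr_gt0 h /=.
    by rewrite add0n prednK // leqnn.
  - apply/negP => /eqP/(congr1 (fun s => 1%N \in s)).
    rewrite mem_filter mem_iota /= expr1 h /K.
    have -> : (1 < 0 + M * 2)%N = true by apply/idP; lia.
    by [].
  - by move: nz; rewrite h eqxx.
exists (y ^+ i0); split.
- by rewrite exprAC yK expr1n.
- by move: i0s; rewrite mem_filter => /andP[].
- move=> g gK gI; have [i gi] := prim_rootP py gK; rewrite gi in gI *.
  apply: hi0; rewrite mem_filter gI mem_iota /= add0n; exact: ltn_ord.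
Qed.


Let euclid (u : algC) : u ^+ K = 1 -> 0 < 'Im u ->
  (forall g : algC, g ^+ K = 1 -> 0 < 'Im g -> 'Re g <= 'Re u) ->
  forall n (g : algC), (#|[set i : 'I_K | ('Re g < 'Re (y ^+ i))%R]| < n)%N ->
  g ^+ K = 1 -> 0 < 'Im g -> exists j, g = u ^+ j.
Proof.
move=> uK uI umax; elim=> // n IH g hc gK gI.
have nu := unitK _ uK; have ng := unitK _ gK.
have [hle|hlt] := real_leP (Creal_Re u) (Creal_Re g).
  exists 1%N; rewrite expr1; apply: eq_upper => //; try exact: ltW.
  by apply: le_anti; rewrite hle umax.
pose g' := g * u^*.
have g'K : g' ^+ K = 1 by rewrite exprMn gK mul1r conjK.
have [h1 h2] := L12C _ _ _ _ (Creal_Re u) (Creal_Im u) (Creal_Re g) (Creal_Im g)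
   (ReIm1 _ nu) (ReIm1 _ ng) uI gI hlt.
have g'I : 0 < 'Im g'.
  by rewrite /g' ImM Re_conj Im_conj; move: h1; congr (0 < _); ring.
have g'R : 'Re g < 'Re g'.
  by rewrite /g' ReM Re_conj Im_conj; move: h2; congr (_ < _); ring.
have [j hj] : exists j, g' = u ^+ j.
  apply: (IH _ _ g'K g'I).
  rewrite -ltnS; apply: leq_trans hc; apply: proper_card; apply/properP; split.
    apply/subsetP => i; rewrite !inE => hi; exact: lt_trans g'R hi.
  have [i1 hi1] := prim_rootP py g'K.
  exists i1; rewrite !inE -hi1 ?g'R ?ltxx //.
exists j.+1; rewrite exprSr -hj /g' -mulrA.
by rewrite -normCKC nu expr1n mulr1.
Qed.


Let Keven : (-1 : algC) ^+ K = 1.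
Proof. by rewrite /K mulnC exprM sqrrN expr1n expr1n. Qed.

Lemma rootN1_prim : K.-primitive_root (M.-root (-1 : algC)).
Proof.
have [u [uK uI umax]] := exists_u.
have nu := unitK _ uK.
have allp : forall g : algC, g ^+ K = 1 -> exists j, g = u ^+ j.
  move=> g gK; have ng := unitK _ gK.
  have Rg := Creal_Im g.
  have cardK : forall g' : algC, (#|[set i : 'I_K | ('Re g' < 'Re (y ^+ i))%R]| < K.+1)%N.
    by move=> g'; rewrite ltnS (leq_trans (max_card _)) // card_ord.
  have [h|h|h] := real_ltgtP Rg (rpred0 _ : (0 : algC) \is Num.real).
  - have hI : 0 < 'Im g^* by rewrite Im_conj oppr_gt0.
    have [j hj] := euclid _ uK uI umax K.+1 (g^*) (cardK _) (conjK _ gK) hI.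
    exists ((K.-1) * j)%N; rewrite exprM -conj_unity // -rmorphXn -hj; exact: (esym (conjCK g)).
  - exact: (euclid _ uK uI umax K.+1 g (cardK _) gK h).
  - have [->|->] := real_unit _ ng h; first by exists 0%N; rewrite expr0.
    have hK : (- u^*) ^+ K = 1 by rewrite exprNn Keven mul1r conjK.
    have hI : 0 < 'Im (- u^*) by rewrite raddfN /= Im_conj opprK.
    have [j hj] := euclid _ uK uI umax K.+1 _ (cardK _) hK hI.
    exists j.+1; rewrite exprSr -hj mulNr -normCKC nu expr1n //.
have pu : K.-primitive_root u.
  have [m pm mK] := prim_order_exists K0 uK.
  have [j yj] := allp y (prim_expr_order py).
  have : (K %| m)%N.
    by rewrite (prim_order_dvd py) yj -exprM mulnC exprM (prim_expr_order pm) expr1n.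
  move=> Km; have -> : K = m by apply/eqP; rewrite eqn_dvd Km mK.
  exact: pm.
have uM : u ^+ M = -1.
  have : (u ^+ M) ^+ 2 == 1 by rewrite -exprM; apply/eqP; exact: uK.
  rewrite sqrf_eq1 => /orP[|/eqP//].
  rewrite -(prim_order_dvd pu) /K => /dvdn_leq; lia.
have nuM : `|u| = 1 := nu.
set z := M.-root (-1 : algC).
have M0 : (0 < M)%N by lia.
have zM : z ^+ M = -1 by rewrite /z rootCK.
have zK : z ^+ K = 1 by rewrite /K exprM zM sqrrN expr1n.
have nz := unitK _ zK.
have zI : 0 <= 'Im z by apply: Im_rootC_ge0.
have uz : 'Re u <= 'Re z by apply: rootC_Re_max => //; exact: ltW.
have [zI0|zI0|zI0] := real_ltgtP (Creal_Im z) (rpred0 _ : (0 : algC) \is Num.real).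
- by move: zI; rewrite real_leNgt ?zI0 ?Creal_Im ?rpred0.
- suff -> : z = u by [].
  apply: eq_upper => //; try exact: ltW.
  by apply: le_anti; rewrite umax // uz.
- have [z1|z1] := real_unit _ nz zI0.
    move: zM; rewrite z1 expr1n => /eqP; rewrite -subr_eq0 opprK.
    by rewrite (_ : 1 + 1 = 2%:R) // pnatr_eq0.
  have := L4C _ _ (Creal_Re u) (Creal_Im u) (ReIm1 _ nu) uI.
  have zr : 'Re z = -1 by rewrite z1; apply/Creal_ReP; rewrite rpredN rpred1.
  by rewrite real_ltNge ?rpred0 ?Creal_Re ?rpredN ?rpred1 // -zr uz.
Qed.

End Prim.

Lemma omega_prim M : (0 < M)%N -> M.-primitive_root (omega M).
Proof.
case: M => // -[|M] _.
  rewrite /omega root1C sqrrN expr1n.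
  by apply/andP; split=> //; apply/forallP=> i; rewrite ord1 unity_rootE expr1 eqxx.
have [y py] := C_prim_root_exists (ltn0Sn (M.+2 * 2).-1).
rewrite prednK in py; last by lia.
have := exp_prim_root (@rootN1_prim M.+2 isT y py) 2.
by rewrite gcdnMl mulnK.
Qed.


Lemma geom (w : algC) M e : M.-primitive_root w ->
  \sum_(j < M) w ^+ (j * e) = if (M %| e)%N then M%:R else 0.
Proof.
move=> pw; case: ifP => h.
  have we : w ^+ e = 1 by apply/eqP; rewrite -(prim_order_dvd pw).
  rewrite (eq_bigr (fun _ => 1)) ?sumr_const ?card_ord //.
  by move=> j _; rewrite mulnC exprM we expr1n.
set x := w ^+ e.
have x1 : x != 1 by rewrite -(prim_order_dvd pw) h.
have xM : x ^+ M = 1 by rewrite -exprM mulnC exprM (prim_expr_order pw) expr1n.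
have := subrX1 x M; rewrite xM subrr => /esym/eqP.
rewrite mulf_eq0 subr_eq0 (negbTE x1) /= => /eqP hs.
by rewrite -[X in _ = X]hs; apply: eq_bigr => j _; rewrite mulnC exprM.
Qed.

Lemma dvd_cond (M L n a b : nat) : (0 < M)%N -> (a < L)%N -> (b < L)%N -> (n < L)%N ->
  (L + L <= M.+1)%N -> (M %| a + M.-1 * (b + n))%N = (a == b + n).
Proof.
move=> M0 aL bL nL LM; set c := (b + n)%N.
have cM : (c < M)%N by rewrite /c; lia.
have aM : (a < M)%N by lia.
have e1 : (a + M.-1 * c + c = a + c * M)%N.
  by case: (M) M0 => // m _; rewrite /=; nia.
apply/idP/eqP => [/dvdnP[k hk]|->].
  have h1 : ((a + M.-1 * c + c) %% M = c)%N by rewrite hk modnMDl modn_small.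
  by move: h1; rewrite e1 addnC modnMDl modn_small.
have -> : (c + M.-1 * c = c * M)%N by case: (M) M0 => // m _; rewrite /=; nia.
by rewrite dvdn_mull.
Qed.

Lemma autocorr (M L n : nat) (w : algC) (q : {poly algC}) :
  M.-primitive_root w -> (size q <= L)%N -> (L + L <= M.+1)%N -> (n < L)%N ->
  (M%:R)^-1 * \sum_(j < M) `|q.[w ^+ j]| ^+ 2 * (w ^+ (j * n))^-1
  = \sum_(b < L) q`_(b + n) * (q`_b)^*.
Proof.
move=> pw hq LM nL.
have M0 := prim_order_gt0 pw.
have term : forall j : 'I_M, `|q.[w ^+ j]| ^+ 2 * (w ^+ (j * n))^-1 =
   \sum_(a < L) \sum_(b < L) q`_a * (q`_b)^* * (w ^+ j) ^+ (a + M.-1 * (b + n)).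
  move=> j; set x := w ^+ j.
  have xM : x ^+ M = 1 by rewrite /x exprAC (prim_expr_order pw) expr1n.
  have cx := conj_unity _ _ M0 xM.
  have nx := norm_unity _ _ M0 xM.
  have ix : x^-1 = x^* by rewrite invC_norm nx expr1n invr1 mul1r.
  rewrite normCK exprM -exprVn ix cx (horner_coef_wide _ hq) rmorph_sum mulr_suml mulr_suml.
  apply: eq_bigr => a _; rewrite mulr_sumr mulr_suml; apply: eq_bigr => b _.
  rewrite rmorphM rmorphXn /= cx [in RHS]exprD [in RHS]exprM [in RHS]exprD.
  set X := x ^+ M.-1; set xa := x ^+ a; set Xb := X ^+ b; set Xn := X ^+ n.
  ring.
have G : forall e, \sum_(j < M) (w ^+ j) ^+ e = if (M %| e)%N then M%:R else 0.
  by move=> e; rewrite -(geom _ _ e pw); apply: eq_bigr => j _; rewrite exprM.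
have Mn0 : (M%:R : algC) != 0 by rewrite pnatr_eq0 -lt0n.
rewrite (eq_bigr _ (fun j _ => term j)) exchange_big /=.
under eq_bigr => a _ do rewrite exchange_big /=.
rewrite exchange_big /= mulr_sumr; apply: eq_bigr => b _.
rewrite mulr_sumr.
under eq_bigr => a _ do rewrite -mulr_sumr G (dvd_cond _ _ _ _ _ M0 (ltn_ord a) (ltn_ord b) nL LM).
have [h|h] := ltnP (b + n) L.
  rewrite (bigD1 (Ordinal h)) //= eqxx big1 ?addr0.
    by rewrite mulrC -mulrA divff // mulr1.
  move=> a ha; rewrite ifF ?mulr0 //; apply: contraNF ha => /eqP e.
  by apply/eqP/val_inj.
rewrite big1.
  by rewrite nth_default ?mul0r //; exact: leq_trans hq h.
move=> a _; rewrite ifF ?mulr0 //; apply/negbTE; rewrite neq_ltn.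
by rewrite (leq_trans (ltn_ord a) h).
Qed.

Lemma fcoef_eq N (p : {poly algC}) n : (0 < N)%N -> (size p <= N)%N -> (n < N)%N ->
  fcoef N p n = \sum_(b < N) p`_(b + n) * (p`_b)^*.
Proof.
move=> N0 hs hn; rewrite /fcoef /=; apply: autocorr => //.
  by apply: omega_prim; lia.
lia.
Qed.

Lemma fcoef'_eq N (p : {poly algC}) n : (2 <= N)%N -> (size p <= N)%N -> (n < N - 1)%N ->
  fcoef' N p n = \sum_(b < N - 1) p^`()`_(b + n) * (p^`()`_b)^*.
Proof.
move=> N2 hs hn; rewrite /fcoef' /= hn; apply: autocorr => //.
- by apply: omega_prim; lia.
- apply/leq_sizeP => j hj; rewrite coef_deriv nth_default ?mul0rn //.
  by apply: leq_trans hs _; lia.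
- lia.
Qed.

Theorem lemma3p3 (N : nat) (p : {poly algC}) :
  (2 <= N)%N -> (size p <= N)%N -> (1 < size p)%N ->
  let f := fcoef N p in
  let f' := fcoef' N p in
  let k := kmax N f in
  let k' := kmax N f' in
  let mval : algC := - (k%:R / 2) + sqrtC (f' k / f k + (k%:R) ^+ 2 / 4) in
  (k' <= k)%N /\
  0 <= f' k / f k /\
  exists m : nat,
    mval = m%:R /\
    (forall j : nat, (j < m)%N -> p`_j = 0) /\
    p`_m != 0 /\
    p`_(m + k) != 0 /\
    (forall j : nat, (m + k < j)%N -> p`_j = 0) /\
    (size p).-1 = (m + k)%N.
Proof.
move=> N2 hs hs1 f f' k k' mval.
have N0 : (0 < N)%N by lia.
have p0 : p != 0 by rewrite -size_poly_gt0; lia.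
set d := (size p).-1.
have hd : size p = d.+1 by rewrite /d prednK //; lia.
have dN : (d < N)%N by lia.
have d1 : (0 < d)%N by lia.
have pd : p`_d != 0 by rewrite -lead_coefE lead_coef_eq0.
have pj0 : forall j, (d < j)%N -> p`_j = 0 by move=> j hj; rewrite nth_default // hd.
have ex : exists j, p`_j != 0 by exists d.
case: (ex_minnP ex) => m pm mmin.
have md : (m <= d)%N := mmin _ pd.
have pjm : forall j, (j < m)%N -> p`_j = 0.
  by move=> j hj; have [//|/mmin] := eqVneq p`_j 0; lia.
set kk := (d - m)%N.
have mkd : (m + kk)%N = d by rewrite /kk subnKC.
have fz : forall n, (kk < n)%N -> (n < N)%N -> f n = 0.
  move=> n h1 h2; rewrite /f fcoef_eq // big1 // => b _.
  have [hb|hb] := ltnP b m; first by rewrite (pjm b) // rmorph0 mulr0.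
  by rewrite pj0 ?mul0r //; lia.
have mN : (m < N)%N by lia.
have fkv : f kk = p`_d * (p`_m)^*.
  rewrite /f fcoef_eq //; last lia.
  rewrite (bigD1 (Ordinal mN)) //= big1 ?addr0; first by rewrite mkd.
  move=> b hb; have bm : (b : nat) != m.
    by apply: contraNneq hb => e; apply/eqP/val_inj.
  have [hb'|hb'] := ltnP b m; first by rewrite (pjm b) // rmorph0 mulr0.
  by rewrite pj0 ?mul0r //; lia.
have fk0 : f kk != 0 by rewrite fkv mulf_neq0 // conjC_eq0.
have kE : k = kk.
  apply/eqP; rewrite eqn_leq; apply/andP; split.
  - apply/bigmax_leqP => i fi; rewrite leqNgt; apply/negP => hi.
    by move: fi; rewrite fz // eqxx.
  - have kN : (kk < N)%N by lia.
    exact: (@leq_bigmax_cond _ (fun n : 'I_N => f n != 0) (fun n : 'I_N => (n : nat)) (Ordinal kN) fk0).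
have f'z : forall n, (kk < n)%N -> f' n = 0.
  move=> n hn; have [hnN|hnN] := ltnP n (N - 1); last first.
    by rewrite /f' /fcoef' /= ltnNge hnN.
  rewrite /f' fcoef'_eq // big1 // => b _; rewrite !coef_deriv.
  have [hb|hb] := ltnP b.+1 m; first by rewrite (pjm b.+1) // mul0rn rmorph0 mulr0.
  by rewrite pj0 ?mul0rn ?mul0r //; lia.
have k'le : (k' <= k)%N.
  rewrite kE /k' /kmax; apply/bigmax_leqP => i fi; rewrite leqNgt; apply/negP => hi.
  by move: fi; rewrite f'z // eqxx.
have f'kv : f' kk = (m * d)%:R * (p`_d * (p`_m)^*).
  have [hk|hk] := ltnP kk (N - 1); last first.
    have m0 : m = 0%N by lia.
    by rewrite /f' /fcoef' /= ltnNge hk /= m0 mul0n mul0r.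
  rewrite /f' fcoef'_eq //.
  have [m0|mpos] := posnP m.
    rewrite m0 mul0n mul0r big1 // => b _; rewrite !coef_deriv.
    by rewrite pj0 ?mul0rn ?mul0r //; lia.
  have m'N : (m.-1 < N - 1)%N by lia.
  rewrite (bigD1 (Ordinal m'N)) //= big1 ?addr0.
    rewrite !coef_deriv prednK // -addSn prednK // mkd.
    by rewrite -[p`_d *+ d]mulr_natl -[p`_m *+ m]mulr_natl rmorphM rmorph_nat natrM; ring.
  move=> b hb; have bm : (b : nat) != m.-1.
    by apply: contraNneq hb => e; apply/eqP/val_inj.
  rewrite !coef_deriv.
  have [hb'|hb'] := ltnP b m.-1; first by rewrite (pjm b.+1) ?mul0rn ?rmorph0 ?mulr0 //; lia.
  by rewrite pj0 ?mul0rn ?mul0r //; lia.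
have nz : p`_d * (p`_m)^* != 0 by rewrite -fkv.
have ratio : f' kk / f kk = (m * d)%:R by rewrite f'kv fkv mulfK.
rewrite /mval kE ratio; split; first by rewrite -kE.
split; first exact: ler0n.
exists m; split.
  have dE : d = (m + kk)%N by rewrite mkd.
  have sq : (m * d)%:R + kk%:R ^+ 2 / 4 = (m%:R + kk%:R / 2 : algC) ^+ 2.
    rewrite dE natrM natrD; field; by rewrite ?pnatr_eq0.
  rewrite sq sqrCK; first by ring.
  by rewrite addr_ge0 ?ler0n // divr_ge0 ?ler0n.
split => //; split => //; split; first by rewrite mkd.
split; first by move=> j; rewrite mkd; exact: pj0.
by rewrite mkd.
Qed.
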